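(* Let $S$ be a compact, metrizable, separable space, let $A$ be the generator of a Feller semigroup on $C(S)$ with resolvent $R_\lambda=(\lambda-A)^{-1}$, $\lambda>0$, and let $\ell_\lambda$, $\lambda>0$, be the Laplace transform of an exit law for $A$. For $x\in S$ let $m_x$ be the Borel sub-probability measure on $[0,\infty)$ such that $\ell_\lambda(x)=\int_{[0,\infty)}e^{-\lambda t}\,m_x(\mathrm dt)$ for all $\lambda>0$. Then $m_x(\{0\})=0$ for every $x\in S$.
   Context: A Feller semigroup is a strongly continuous semigroup of positive contractions on $C(S)$ (real continuous functions, sup norm) with $T(0)=I$, not necessarily conservative. A family $\ell_\lambda$, $\lambda>0$, is the Laplace transform of an exit law for $A$ if: (a) $(0,\infty)\ni\lambda\mapsto\ell_\lambda\in C(S)$ is locally bounded, non-negative and not identically zero (i.e. $\ell_\lambda\neq0$ for at least one $\lambda$); (b) $\lim_{\lambda\to0+}\ell_\lambda(x)\le1$ for each $x\in S$; (c) $(\lambda-\mu)R_\lambda\ell_\mu=\ell_\mu-\ell_\lambda$ for all $\lambda,\mu>0$. For such $\ell_\lambda$, for each $x$ the function $\lambda\mapsto\ell_\lambda(x)$ is completely monotone with $\lim_{\lambda\to0+}\ell_\lambda(x)\le 1$, so by Bernstein's theorem there is a (unique) Borel sub-probability measure $m_x$ on $[0,\infty)$ with $\ell_\lambda(x)=\int e^{-\lambda t}m_x(\mathrm dt)$. *)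

(* Defs.v *)
From HB Require Import structures.
From mathcomp Require Import all_boot all_order all_algebra.
From mathcomp Require Import all_classical all_reals all_analysis.
Set Implicit Arguments. Unset Strict Implicit. Unset Printing Implicit Defensive.
Import Order.TTheory GRing.Theory Num.Theory.
Import numFieldNormedType.Exports.
Local Open Scope classical_set_scope.
Local Open Scope ring_scope.

(* C(S) is represented by the continuous functions S -> R; the sup-norm
   contraction property is written out pointwise. Operators on C(S) are
   modelled as maps (S -> R) -> (S -> R); only their values on continuous
   functions matter. *)

Section Feller.
Context {R : realType} {S : topologicalType}.

Definition cfun (f : S -> R) := continuous f.

(* Feller semigroup: strongly continuous semigroup (t >= 0) of positive
   contractions of C(S), with T(0) = I (not necessarily conservative). *)
Definition is_feller_semigroup (T : R -> (S -> R) -> (S -> R)) : Prop :=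
      (forall t f, 0 <= t -> cfun f -> cfun (T t f)) /\
      (forall t a f g, 0 <= t -> cfun f -> cfun g ->
         T t (fun x => a * f x + g x) = (fun x => a * T t f x + T t g x)) /\
      (forall t f, 0 <= t -> cfun f -> (forall x, 0 <= f x) ->
         forall x, 0 <= T t f x) /\
      (forall t f M, 0 <= t -> cfun f -> (forall x, `|f x| <= M) ->
         forall x, `|T t f x| <= M) /\
      (forall f, cfun f -> T 0 f = f) /\
      (forall s t f, 0 <= s -> 0 <= t -> cfun f -> T (s + t) f = T s (T t f)) /\
      (forall f, cfun f -> forall e, 0 < e -> exists2 d, 0 < d &
         forall t, 0 <= t -> t < d -> forall x, `|T t f x - f x| < e).

Definition generator_at (T : R -> (S -> R) -> (S -> R)) (f g : S -> R) : Prop :=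
  cfun f /\
  forall e, 0 < e -> exists2 d, 0 < d &
    forall t, 0 < t -> t < d -> forall x, `|(T t f x - f x) / t - g x| < e.

(* Rs is the resolvent (lambda - A)^-1 of the generator A of T, lambda > 0:
   for every f in C(S), Rs lambda f lies in D(A) and
   (lambda - A)(Rs lambda f) = f, i.e. A (Rs lambda f) = lambda Rs lambda f - f. *)
Definition is_resolvent (T : R -> (S -> R) -> (S -> R))
    (Rs : R -> (S -> R) -> (S -> R)) : Prop :=
  forall lam f, 0 < lam -> cfun f ->
    generator_at T (Rs lam f) (fun x => lam * Rs lam f x - f x).

Definition is_exit_law_LT (Rs : R -> (S -> R) -> (S -> R))
    (l : R -> S -> R) : Prop :=
      (forall lam, 0 < lam -> cfun (l lam)) /\
      (forall lam0, 0 < lam0 -> exists2 d, 0 < d & exists M : R,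
         forall lam, 0 < lam -> `|lam - lam0| < d -> forall x, `|l lam x| <= M) /\
      (forall lam x, 0 < lam -> 0 <= l lam x) /\
      (exists lam, 0 < lam /\ exists x, l lam x != 0) /\
      (forall x, exists2 c : R, l ^~ x @ 0^'+ --> c & c <= 1) /\
      (forall lam mu, 0 < lam -> 0 < mu ->
         (fun x => (lam - mu) * Rs lam (l mu) x) = (fun x => l mu x - l lam x)).

End Feller.

(* Main.v *)
Require Import Defs.
From HB Require Import structures.
From mathcomp Require Import all_boot all_order all_algebra.
From mathcomp Require Import all_classical all_reals all_analysis.
From mathcomp Require Import measurable_realfun.
From mathcomp Require Import ring lra.
Import Order.TTheory GRing.Theory Num.Theory.
Import numFieldNormedType.Exports.
Local Open Scope classical_set_scope.
Local Open Scope ring_scope.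

Section P.
Context {R : realType}.
Lemma bernoulli_ineq (q : R) n : 0 <= q -> 1 + n%:R * q <= (1 + q) ^+ n.
Proof.
move=> q0; elim: n => [|n IH]; first by rewrite mul0r addr0 expr0.
rewrite exprS -natr1.
have h1 : 0 <= 1 + q by lra.
have := ler_wpM2l h1 IH.
have : 0 <= n%:R * q * q by rewrite !mulr_ge0.
have e : (1 + q) * (1 + n%:R * q) = 1 + (n%:R + 1) * q + n%:R * q * q by ring.
rewrite e; set a := n%:R * q * q; set b := (1 + q) * _ ; move=> h2 h3.
apply: le_trans h3; lra.
Qed.
Lemma geo_bound (q B : R) n (D : nat -> R) : 0 < q -> 0 <= B ->
  (forall k, (k < n)%N -> (1 + q) * D k <= D k.+1) -> D n <= B ->
  D 0%N <= B / (1 + n%:R * q).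
Proof.
move=> q0 B0 HD DnB.
have Hk : forall k, (k <= n)%N -> (1 + q) ^+ k * D 0%N <= D k.
  elim=> [|k IH] kn; first by rewrite expr0 mul1r.
  have kn' : (k < n)%N by exact: kn.
  apply: le_trans (HD k kn'); rewrite exprS -mulrA.
  apply: ler_wpM2l; [lra | exact: IH (ltnW kn)].
have pos : 0 < 1 + n%:R * q by rewrite ltr_wpDr // mulr_ge0 // ltW.
rewrite ler_pdivlMr //.
have [D0|D0] := lerP (D 0%N) 0.
  by apply: le_trans (_ : 0 <= B) => //; rewrite mulr_le0_ge0 // ltW.
apply: le_trans DnB; apply: le_trans (Hk n (leqnn n)).
rewrite mulrC; apply: ler_wpM2r; [exact: ltW | exact: bernoulli_ineq (ltW q0)].
Qed.

Lemma seq_bound (lam h eps K gx : R) (n : nat) (A E G : nat -> R) :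
 0 < lam -> 0 < h -> 0 <= eps -> `|gx| <= K ->
 (forall k, (k < n)%N -> A k.+1 = (1 + h * lam) * A k + h * (E k - G k)) ->
 (forall k, (k < n)%N -> `|E k| <= eps) ->
 (forall k, (k < n)%N -> `|G k - gx| <= eps) ->
 `|A n| <= K / lam ->
 `|lam * A 0%N - gx| <= 2 * eps + (2 * K + 2 * eps) / (1 + n%:R * h * lam).
Proof.
move=> l0 h0 e0 gK HA HE HG An.
pose V k := lam * A k.
have q0 : 0 < h * lam by rewrite mulr_gt0.
have ng := normr_ge0 gx.
have B0 : 0 <= 2 * K + 2 * eps by lra.
have HV : forall k, (k < n)%N -> V k.+1 = (1 + h * lam) * V k + h * lam * (E k - G k).
  by move=> k kn; rewrite /V HA //; ring.
have Vn : `|V n| <= K.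
  by rewrite /V normrM (gtr0_norm l0) -ler_pdivlMl // mulrC.
move: Vn; rewrite ler_norml => /andP [Vn1 Vn2].
move: gK; rewrite ler_norml => /andP [gK1 gK2].
have pos : 0 < 1 + n%:R * h * lam by rewrite ltr_wpDr // !mulr_ge0 // ltW.
have up : V 0%N - (gx + 2 * eps) <= (2 * K + 2 * eps) / (1 + n%:R * (h * lam)).
  apply: (@geo_bound (h * lam) _ n (fun k => V k - (gx + 2 * eps))) => //; last by lra.
  move=> k kn; rewrite HV // -subr_ge0.
  have -> : (1 + h * lam) * V k + h * lam * (E k - G k) - (gx + 2 * eps) -
     (1 + h * lam) * (V k - (gx + 2 * eps)) = h * lam * (E k - G k + (gx + 2 * eps)) by ring.
  have := HE k kn; rewrite ler_norml => /andP [e1 e2].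
  have := HG k kn; rewrite ler_norml => /andP [g1 g2].
  apply: mulr_ge0; [exact: ltW | lra].
have low : (gx - 2 * eps) - V 0%N <= (2 * K + 2 * eps) / (1 + n%:R * (h * lam)).
  apply: (@geo_bound (h * lam) _ n (fun k => (gx - 2 * eps) - V k)) => //; last by lra.
  move=> k kn; rewrite HV // -subr_ge0.
  have -> : (gx - 2 * eps) - ((1 + h * lam) * V k + h * lam * (E k - G k)) -
     (1 + h * lam) * ((gx - 2 * eps) - V k) = h * lam * (G k - E k - (gx - 2 * eps)) by ring.
  have := HE k kn; rewrite ler_norml => /andP [e1 e2].
  have := HG k kn; rewrite ler_norml => /andP [g1 g2].
  apply: mulr_ge0; [exact: ltW | lra].
rewrite mulrA in up low; rewrite /V in up low.
by rewrite ler_norml; apply/andP; split; lra.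
Qed.
End P.

Section H.
Context {R : realType} {S : topologicalType}.

Lemma cfun_comb (a b : R) {f g : S -> R} : cfun f -> cfun g ->
  cfun (fun y => a * f y + b * g y).
Proof.
move=> cf cg y; apply: cvgD; [apply: (cvgM (f:=fun=> a)) | apply: (cvgM (f:=fun=> b))]; by [exact: cvg_cst|exact: cf|exact: cg].
Qed.

Lemma cfun_cst (c : R) : cfun (fun _ : S => c).
Proof. by move=> y; exact: cvg_cst. Qed.

Variable T : R -> (S -> R) -> (S -> R).
Hypothesis HT : is_feller_semigroup T.

Lemma T_zero t : 0 <= t -> T t (fun _ => 0) = (fun _ => 0).
Proof.
case: HT => _ [Tlin _] t0.
have := Tlin t 1 (fun _ => 0) (fun _ => 0) t0 (cfun_cst 0) (cfun_cst 0).
have -> : (fun _ : S => 1 * (0:R) + 0) = (fun _ => 0) by apply/funext => y; rewrite mulr0 addr0.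
move=> E; apply/funext => y; have := congr1 (fun h => h y) E => /=.
rewrite mul1r => E1; lra.
Qed.

Lemma T_lin2 t a b f g : 0 <= t -> cfun f -> cfun g ->
  T t (fun y => a * f y + b * g y) = (fun y => a * T t f y + b * T t g y).
Proof.
move=> t0 cf cg; case: HT => _ [Tlin _].
have cbg : cfun (fun y => b * g y).
  have := cfun_comb b 0 cg cf.
  by have -> : (fun y => b * g y + 0 * f y) = (fun y => b * g y) by apply/funext => y; rewrite mul0r addr0.
rewrite (Tlin t a f (fun y => b * g y)) //.
have -> : (fun y => b * g y) = (fun y => b * g y + (fun _ => 0) y) by apply/funext => y; rewrite addr0.
rewrite (Tlin t b g (fun _ => 0)) // ?T_zero //; last exact: cfun_cst.
by apply/funext => y; rewrite addr0.
Qed.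

Lemma gen_le0 {z w x0} : generator_at T z w ->
  (forall t, 0 < t -> T t z x0 <= z x0) -> w x0 <= 0.
Proof.
case=> _ gen Hle; rewrite leNgt; apply/negP => wpos.
have [d d0 Hd] := gen _ wpos.
have t0 : 0 < d / 2 by rewrite divr_gt0.
have := Hd (d/2) t0 _ x0.
rewrite ltr_pdivrMr // ?ltr_pMr // ?ltr1n // => /(_ isT).
have : (T (d/2) z x0 - z x0) / (d/2) <= 0.
  by rewrite pmulr_lle0 ?invr_gt0 // subr_le0 Hle.
move=> H1 H2; have := ltr_distlCBl H2.
by rewrite subrr => /lt_le_trans /(_ H1); rewrite ltxx.
Qed.

Lemma gen_ge0 {z w x0} : generator_at T z w ->
  (forall t, 0 < t -> z x0 <= T t z x0) -> 0 <= w x0.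
Proof.
case=> _ gen Hle; rewrite leNgt; apply/negP => wneg.
have wpos : 0 < - w x0 by rewrite oppr_gt0.
have [d d0 Hd] := gen _ wpos.
have t0 : 0 < d / 2 by rewrite divr_gt0.
have := Hd (d/2) t0 _ x0.
rewrite ltr_pdivrMr // ?ltr_pMr // ?ltr1n // => /(_ isT).
have : 0 <= (T (d/2) z x0 - z x0) / (d/2).
  by rewrite divr_ge0 ?subr_ge0 ?Hle // ltW.
move=> H1; rewrite ltr_distl => /andP [H2 H3]; lra.
Qed.

Lemma max_principle (Sc : compact [set: S]) lam z f M : 0 < lam ->
  generator_at T z (fun y => lam * z y - f y) -> (forall y, `|f y| <= M) ->
  forall y, `|z y| <= M / lam.
Proof.
move=> lam0 gz fM y.
have cz : cfun z by case: gz.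
have cnz : continuous (fun y => `|z y|) by move=> u; apply: cvg_norm; exact: cz.
have [x0 _ Hx0] := @compact_EVT_max S R (fun y => `|z y|) [set: S]
   (ex_intro _ y I) Sc (continuous_subspaceT cnz).
have Hmax : forall u, `|z u| <= `|z x0| by move=> u; apply: Hx0; rewrite inE.
case: HT => _ [_ [_ [Tcontr _]]].
have key : lam * `|z x0| <= M.
  have [zpos|zneg] := lerP 0 (z x0).
  - have H : forall t, 0 < t -> T t z x0 <= z x0.
      move=> t t0; have := Tcontr t z `|z x0| (ltW t0) cz Hmax x0.
      rewrite (ger0_norm zpos); rewrite ler_norml => /andP [_ h]; lra.
    have := gen_le0 gz H; have := fM x0; rewrite (ger0_norm zpos); rewrite ler_norml => /andP [_ h1] h2; lra.
  - have H : forall t, 0 < t -> z x0 <= T t z x0.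
      move=> t t0; have := Tcontr t z `|z x0| (ltW t0) cz Hmax x0.
      rewrite (ltr0_norm zneg); rewrite ler_norml => /andP [h _]; lra.
    have := gen_ge0 gz H; have := fM x0; rewrite (ltr0_norm zneg); rewrite ler_norml => /andP [h1 _] h2; lra.
rewrite ler_pdivlMr // (le_trans _ key) // mulrC ler_pM2l //.
Qed.

Lemma approx_res (g : S -> R) K x eps delta lam u :
  cfun g -> (forall y, `|g y| <= K) -> 0 < eps -> 0 < delta ->
  (forall t, 0 <= t -> t < delta -> `|T t g x - g x| < eps) ->
  0 < lam -> generator_at T u (fun y => lam * u y - g y) ->
  (forall y, `|u y| <= K / lam) ->
  `|lam * u x - g x| <= 2 * eps + (2 * K + 2 * eps) / (1 + delta * lam).
Proof.
move=> cg gK e0 dl0 Hsc l0 gu uK.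
have cu : cfun u by case: gu.
case: gu => _ gen.
have [d d0 Hd] := gen eps e0.
case: HT => Tc [Tlin [Tpos [Tcontr [T0 [Tsg Tsc]]]]].
pose N := (Num.Def.archi_bound (delta / d)).+1.
have Nb : delta / d < N%:R.
  apply: lt_le_trans (archi_boundP _) _; first by rewrite divr_ge0 // ltW.
  by rewrite ler_nat.
have Npos : 0 < N%:R :> R by rewrite ltr0n.
pose h := delta / N%:R.
have h0 : 0 < h by rewrite divr_gt0.
have hd : h < d by rewrite ltr_pdivrMr // mulrC -ltr_pdivrMr.
have hne : h != 0 by rewrite gt_eqF.
have nh : N%:R * h = delta by rewrite /h mulrC -mulrA mulVf ?mulr1 // gt_eqF.
pose e := fun y => (T h u y - u y) / h - (lam * u y - g y).
have ce : cfun e.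
  have c1 := cfun_comb (- h^-1 - lam) 1 cu cg.
  have c2 := cfun_comb h^-1 1 (Tc h u (ltW h0) cu) c1.
  have -> : e = (fun y => h^-1 * T h u y + 1 * ((- h^-1 - lam) * u y + 1 * g y)).
    by apply/funext => y; rewrite /e; ring.
  exact: c2.
have eb : forall y, `|e y| <= eps by move=> y; apply/ltW/Hd.
have ceg : cfun (fun y => 1 * e y + (-1) * g y) by exact: cfun_comb.
have Th : T h u = (fun y => (1 + h * lam) * u y + h * (fun y => 1 * e y + (-1) * g y) y).
  by apply/funext => y; rewrite /e; field.
have kh0 : forall k : nat, 0 <= k%:R * h by move=> k; rewrite mulr_ge0 // ltW.
have := @seq_bound _ lam h eps K (g x) N (fun k => T (k%:R * h) u x)
  (fun k => T (k%:R * h) e x) (fun k => T (k%:R * h) g x) l0 h0 (ltW e0) (gK x).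
rewrite /= mul0r T0 // nh; apply.
- move=> k kn; rewrite -natr1 mulrDl mul1r Tsg // ?ltW // Th.
  rewrite T_lin2 //= T_lin2 //; ring.
- move=> k kn; exact: Tcontr.
- move=> k kn; apply/ltW/Hsc => //.
  by rewrite -nh ltr_pM2r // ltr_nat.
- by apply: Tcontr => //; exact: ltW.
Qed.

End H.

Lemma meas_part (R : realType) (m : {measure set (measurableTypeR R) -> \bar R}) (lam : R) :
  (m [set 0%R : measurableTypeR R] <= \int[m]_(t in [set t : measurableTypeR R | (0 <= t)%R])
            (expR (- (lam * t)))%:E)%E.
Proof.
have mf : measurable_fun [set t : measurableTypeR R | (0 <= t)%R]
   (fun t : R => (expR (- (lam * t)))%:E).
  apply/measurable_EFinP; apply: (measurable_funS (E:=setT)) => //.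
  apply: measurableT_comp; first exact: measurable_expR.
  apply: continuous_measurable_fun => t.
  by apply: continuousN; apply: cvgM; [exact: cvg_cst | exact: cvg_id].
apply: (@le_trans _ _ (\int[m]_(t in [set 0%R : measurableTypeR R]) (expR (- (lam * t)))%:E)%E).
  rewrite (eq_integral (cst 1%E)); last first.
    by move=> t; rewrite inE /= => ->; rewrite mulr0 oppr0 expR0.
  by rewrite integral_cst // mul1e.
apply: ge0_subset_integral => //.
- have -> : [set t : measurableTypeR R | (0 <= t)%R] = `[0%R, +oo[%classic.
    by apply/seteqP; split => t /=; rewrite in_itv /= andbT.
  exact: measurable_itv.
- by move=> t /= ->.
Qed.

Theorem proposition2 (R : realType) (S : metricType R)
  (Scompact : compact [set: S])
  (Sseparable : exists D : set S, countable D /\ closure D = [set: S])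
  (T : R -> (S -> R) -> (S -> R)) (Rs : R -> (S -> R) -> (S -> R))
  (l : R -> S -> R) :
  is_feller_semigroup T -> is_resolvent T Rs -> is_exit_law_LT Rs l ->
  forall (x : S) (m : {measure set (measurableTypeR R) -> \bar R}),
    (m [set: measurableTypeR R] <= 1)%E ->
    m [set t : measurableTypeR R | t < 0] = 0%E ->
    (forall lam : R, 0 < lam ->
       (l lam x)%:E =
         (\int[m]_(t in [set t : measurableTypeR R | (0 <= t)%R])
            (expR (- (lam * t)))%:E)%E) ->
    m [set 0] = 0%E.
Proof.
move=> HT HR HL x m _ _ Hl.
have HT' := HT.
case: HL => lc [lb [lpos [_ [_ lres]]]].
have cg := lc 1 ltr01.
have [d0 d0pos [K HK]] := lb 1 ltr01.
have gK : forall y, `|l 1 y| <= K.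
  by move=> y; apply: HK => //; rewrite subrr normr0.
have K0 : 0 <= K := le_trans (normr_ge0 _) (gK x).
have key : forall eps, 0 < eps -> exists2 lam, 0 < lam & l lam x <= 4 * eps.
  move=> eps e0.
  case: HT' => _ [_ [_ [_ [_ [_ Tsc]]]]].
  have [delta dpos Hd] := Tsc (l 1) cg eps e0.
  pose a := (2 * K + 2 * eps) / eps.
  pose b := K / eps.
  have a0 : 0 <= a by rewrite /a divr_ge0 // ?ltW //; lra.
  have b0 : 0 <= b by rewrite /b divr_ge0 // ltW.
  have ea : eps * a = 2 * K + 2 * eps by rewrite /a; field; rewrite gt_eqF.
  have eb : eps * b = K by rewrite /b; field; rewrite gt_eqF.
  pose lam := a / delta + b + 1.
  have ad0 : 0 <= a / delta by rewrite divr_ge0 // ltW.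
  have l0 : 0 < lam by rewrite /lam; lra.
  have dl : delta * lam = a + delta * (b + 1).
    by rewrite /lam; field; rewrite gt_eqF.
  exists lam => //.
  have gu := HR lam (l 1) l0 cg.
  have uK := @max_principle _ _ T HT Scompact lam _ _ K l0 gu gK.
  have ap := @approx_res _ _ T HT (l 1) K x eps delta lam _ cg gK e0 dpos (fun t t0 td => Hd t t0 td x) l0 gu uK.
  have rx := congr1 (fun f => f x) (lres lam 1 l0 ltr01); rewrite /= in rx.
  set u := Rs lam (l 1) in gu uK ap rx.
  have B1 : (2 * K + 2 * eps) / (1 + delta * lam) <= eps.
    have p1 : 0 < 1 + delta * lam by rewrite ltr_wpDr // mulr_ge0 // ltW.
    rewrite ler_pdivrMr // dl.
    have : 0 <= eps * (delta * (b + 1)) by rewrite !mulr_ge0 // ltW //; lra.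
    have -> : eps * (1 + (a + delta * (b + 1))) = eps + eps * a + eps * (delta * (b + 1)) by ring.
    rewrite ea; lra.
  have B2 : K / lam <= eps.
    rewrite ler_pdivrMr //.
    have : 0 <= eps * (a / delta) by rewrite mulr_ge0 // ltW.
    have -> : eps * lam = eps * (a / delta) + eps * b + eps by rewrite /lam; ring.
    rewrite eb; lra.
  have := uK x; have := ap; rewrite !ler_norml => /andP [ap1 ap2] /andP [u1 u2].
  have : l lam x = l 1 x - lam * u x + u x by lra.
  lra.
have mle : forall lam, 0 < lam -> (m [set 0%R : measurableTypeR R] <= (l lam x)%:E)%E.
  by move=> lam l0; rewrite Hl //; exact: meas_part.
apply/le_anti; rewrite measure_ge0 andbT.
case E: (m [set 0]) => [r| |] //.
- rewrite lee_fin leNgt; apply/negP => r0.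
  have [lam l0 Hlam] := key (r / 8) (divr_gt0 r0 (ltr0n _ 8)).
  have := mle lam l0; rewrite E lee_fin => H; lra.
- have [lam l0 _] := key 1 ltr01.
  by have := mle lam l0; rewrite E.
Qed.
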